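(* (Model Existence.) Every member of an abstract consistency class has a model; if the abstract consistency class is complete, the member has a surjective model.
   Context: Types: a countable set of base types including a distinguished $o$; other base types are sorts ($\alpha$). Types: base types and $\sigma\tau$ (functions from $\sigma$ to $\tau$; $\sigma\tau\mu=\sigma(\tau\mu)$). Countably many names, each with a unique type, infinitely many of each type. Terms: names; $st:\mu$ for $s:\tau\mu,t:\tau$; $\lambda x.t:\sigma\tau$ for a name $x:\sigma$, $t:\tau$. Logical constants: $\neg:oo$, $=_\sigma:\sigma\sigma o$; other names are variables. Formulas: terms of type $o$; $s=_\sigma t$ is $(=_\sigma s)t$; $s\neq_\sigma t$ is $\neg(s=_\sigma t)$. Semantics: a frame $\mathcal{D}$ maps types to nonempty sets with $\mathcal{D}(\sigma\tau)\subseteq(\mathcal{D}\sigma\to\mathcal{D}\tau)$. An assignment $\mathcal{I}$ into $\mathcal{D}$ extends $\mathcal{D}$ and maps names $x:\sigma$ into $\mathcal{D}\sigma$; $\mathcal{I}^x_a$ is the update. Partial evaluation: $\hat{\mathcal{I}}x=\mathcal{I}x$; $\hat{\mathcal{I}}(st)=(\hat{\mathcal{I}}s)(\hat{\mathcal{I}}t)$ when defined; $\hat{\mathcal{I}}(\lambda x.s)=f$ if $\lambda x.s:\sigma\tau$, $f\in\mathcal{D}(\sigma\tau)$ and $\widehat{\mathcal{I}^x_a}s=fa$ for all $a\in\mathcal{D}\sigma$. Interpretation: assignment with total evaluation; surjective if every $a\in\mathcal{I}\sigma$ equals $\hat{\mathcal{I}}s$ for some $s:\sigma$. Logical: $\mathcal{I}o=\{0,1\}$,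 $\mathcal{I}(\neg)$ negation, $\mathcal{I}(=_\sigma)$ identity. Model of a set of formulas: logical interpretation evaluating all of them to $1$. Normalization: fixed type-preserving total $[\cdot]$; $s$ normal iff $[s]=s$; (N1) $[[s]]=[s]$; (N2) $[[s]t]=[st]$; (N3) $[xs_1\dots s_n]=x[s_1]\dots[s_n]$ for a name $x$, $n\ge0$, $xs_1\dots s_n$ of base type; (N4) $\hat{\mathcal{I}}[s]=\hat{\mathcal{I}}s$ for every interpretation. Substitutions: type-preserving partial functions $\theta$ from names to terms ($\theta^x_s$ update), each extending to a type-preserving total $\hat\theta$ with (S1) $\hat\theta x=\theta x$ if $x\in\mathrm{Dom}\theta$, else $x$; (S2) $\hat\theta(st)=(\hat\theta s)(\hat\theta t)$; (S3) $[(\hat\theta(\lambda x.s))t]=[\widehat{\theta^x_t}s]$; (S4) $[\hat\emptyset s]=[s]$. A branch is a set of normal formulas. An abstract consistency class is a set $\Gamma$ of branches such that every $A\in\Gamma$ satisfies ($x$ ranges over variables): (DN) if $\neg\neg s\in A$ then $A\cup\{s\}\in\Gamma$; (BQ) if $s=_ot\in A$ then $A\cup\{s,t\}\in\Gamma$ or $A\cup\{\neg s,\neg t\}\in\Gamma$; (BE) if $s\neq_ot\in A$ then $A\cup\{s,\neg t\}\in\Gamma$ or $A\cup\{\neg s,t\}\in\Gamma$; (FQ) if $s=_{\sigma\tau}t\in A$ then $A\cup\{[su]=[tu]\}\in\Gamma$ for every normal $u:\sigma$; (FE) if $s\neq_{\sigma\tau}t\in A$ then $A\cup\{[sx]\neq[tx]\}\in\Gamma$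 for some variable $x$; (Mat) if $xs_1\dots s_n,\neg xt_1\dots t_n\in A$ then $n\ge1$ and $A\cup\{s_i\neq t_i\}\in\Gamma$ for some $i$; (Dec) if $xs_1\dots s_n\neq_\alpha xt_1\dots t_n\in A$ then $n\ge1$ and $A\cup\{s_i\neq t_i\}\in\Gamma$ for some $i$; (Con) if $s=_\alpha t,u\neq_\alpha v\in A$ then $A\cup\{s\neq u,t\neq u\}\in\Gamma$ or $A\cup\{s\neq v,t\neq v\}\in\Gamma$. $\Gamma$ is complete if for all $A\in\Gamma$ and normal formulas $s$, $A\cup\{s\}\in\Gamma$ or $A\cup\{\neg s\}\in\Gamma$. *)

(* Defs.v *)
From mathcomp Require Import all_boot.
From Stdlib Require Import PeanoNat.
Set Implicit Arguments.
Unset Strict Implicit.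
Unset Printing Implicit Defensive.

Section STT.

Variable B : countType.
Variable bo : B.

Inductive ty : Type := Base of B | Arr of ty & ty.

Definition o : ty := Base bo.

Inductive name : Type :=
| NVar of ty & nat
| NNeg
| NEq of ty.

Definition nty (x : name) : ty :=
  match x with
  | NVar s _ => s
  | NNeg => Arr o o
  | NEq s => Arr s (Arr s o)
  end.

Definition ty_eq_dec (s t : ty) : {s = t} + {s <> t}.
Proof. decide equality; exact: eq_comparable. Defined.

Definition name_eq_dec (x y : name) : {x = y} + {x <> y}.
Proof. decide equality; first [exact: ty_eq_dec | exact: PeanoNat.Nat.eq_dec]. Defined.

Inductive tm : ty -> Type :=
| Nm (x : name) : tm (nty x)
| App (s t : ty) : tm (Arr s t) -> tm s -> tm t
| Lam (x : name) (t : ty) : tm t -> tm (Arr (nty x) t).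

Arguments App {s t} _ _.
Arguments Lam x {t} _.

Definition Neg (s : tm o) : tm o := @App o o (Nm NNeg) s.
Definition Eqt (s : ty) (a c : tm s) : tm o :=
  @App s o (@App s (Arr s o) (Nm (NEq s)) a) c.
Definition Neq (s : ty) (a c : tm s) : tm o := Neg (Eqt a c).

Fixpoint head (s : ty) (t : tm s) : option name :=
  match t with
  | Nm x => Some x
  | App _ _ u _ => head u
  | Lam _ _ _ => None
  end.

(* A frame: nonempty sets D s, with D (s t) a set of functions D s -> D t,
   represented through an extensional (injective) application map. *)
Record frame := Frame {
  dom : ty -> Type;
  app : forall s t, dom (Arr s t) -> dom s -> dom t;
  app_ext : forall s t (f g : dom (Arr s t)), (forall a, app f a = app g a) -> f = g;
  dom_ne : forall s, inhabited (dom s) }.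

Arguments app {f0 s t} _ _.

Definition asg (F : frame) := forall x : name, dom F (nty x).

Definition upd (F : frame) (I : asg F) (x : name) (a : dom F (nty x)) : asg F :=
  fun y => match name_eq_dec x y with
           | left e => eq_rect x (fun z => dom F (nty z)) a y e
           | right _ => I y
           end.
Arguments upd {F} I x a.

(* partial evaluation, as a relation: ev I t a  means  \hat I t = a *)
Inductive ev (F : frame) : asg F -> forall s, tm s -> dom F s -> Prop :=
| ev_Nm (I : asg F) (x : name) : ev I (Nm x) (I x)
| ev_App (I : asg F) s t (u : tm (Arr s t)) (v : tm s) (f : dom F (Arr s t)) (a : dom F s) :
    ev I u f -> ev I v a -> ev I (App u v) (app f a)
| ev_Lam (I : asg F) (x : name) t (u : tm t) (f : dom F (Arr (nty x) t)) :
    (forall a : dom F (nty x), ev (upd I x a) u (app f a)) -> ev I (Lam x u) f.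

Definition interp (F : frame) (I : asg F) : Prop :=
  forall s (t : tm s), exists a, ev I t a.

Definition surjective (F : frame) (I : asg F) : Prop :=
  forall s (a : dom F s), exists t : tm s, ev I t a.

(* logical: D o is {0,1} (via the bijection b), I(neg) is negation,
   I(=_s) is identity *)
Definition logical_by (F : frame) (I : asg F) (b : dom F o -> bool) : Prop :=
  bijective b /\
  (forall a : dom F o, b (app (I NNeg : dom F (Arr o o)) a) = ~~ b a) /\
  (forall s (a c : dom F s),
      b (app (app (I (NEq s) : dom F (Arr s (Arr s o))) a) c) = true <-> a = c).

Definition model (F : frame) (I : asg F) (A : tm o -> Prop) : Prop :=
  interp I /\
  exists b, logical_by I b /\ forall s, A s -> exists v, ev I s v /\ b v = true.

Definition normal (nf : forall s, tm s -> tm s) s (t : tm s) : Prop := nf s t = t.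

Fixpoint argnorm (nf : forall s, tm s -> tm s) s (t : tm s) : tm s :=
  match t in tm s0 return tm s0 with
  | Nm x => Nm x
  | App _ _ u v => App (argnorm nf u) (nf _ v)
  | Lam x _ u => Lam x u
  end.

Definition is_normalization (nf : forall s, tm s -> tm s) : Prop :=
  (forall s (t : tm s), nf s (nf s t) = nf s t) /\
  (forall s t (u : tm (Arr s t)) (v : tm s), nf t (App (nf _ u) v) = nf t (App u v)) /\
  (forall (b : B) (t : tm (Base b)) (x : name),
               head t = Some x -> nf _ t = argnorm nf t) /\
  (forall (F : frame) (I : asg F), interp I ->
               forall s (t : tm s) (a : dom F s), ev I (nf s t) a <-> ev I t a).

Definition sub := forall x : name, option (tm (nty x)).

Definition supd (th : sub) (x : name) (t : tm (nty x)) : sub :=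
  fun y => match name_eq_dec x y with
           | left e => Some (eq_rect x (fun z => tm (nty z)) t y e)
           | right _ => th y
           end.
Arguments supd th x t : clear implicits.

Definition sub0 : sub := fun _ => None.

Definition is_subst (nf : forall s, tm s -> tm s) (sb : sub -> forall s, tm s -> tm s) : Prop :=
  (forall (th : sub) (x : name),
               sb th _ (Nm x) = match th x with Some t => t | None => Nm x end) /\
  (forall (th : sub) s t (u : tm (Arr s t)) (v : tm s),
               sb th _ (App u v) = App (sb th _ u) (sb th _ v)) /\
  (forall (th : sub) (x : name) t (u : tm t) (v : tm (nty x)),
               nf t (App (sb th _ (Lam x u)) v) = nf t (sb (supd th x v) _ u)) /\
  (forall s (t : tm s), nf s (sb sub0 s t) = nf s t).

Definition add (A : tm o -> Prop) (s : tm o) : tm o -> Prop := fun u => A u \/ u = s.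

(* some_arg P (x s1..sn) (x t1..tn) : n >= 1 and P si ti for some i *)
Inductive some_arg (P : forall s, tm s -> tm s -> Prop) : forall t, tm t -> tm t -> Prop :=
| sa_here s t (u v : tm (Arr s t)) (a c : tm s) :
    P s a c -> some_arg P (App u a) (App v c)
| sa_there s t (u v : tm (Arr s t)) (a c : tm s) :
    some_arg P u v -> some_arg P (App u a) (App v c).

Record acc (nf : forall s, tm s -> tm s) (G : (tm o -> Prop) -> Prop) : Prop := {
  acc_branch : forall A, G A -> forall s, A s -> normal nf s;
  acc_DN : forall A, G A -> forall s, A (Neg (Neg s)) -> G (add A s);
  acc_BQ : forall A, G A -> forall s t : tm o, A (Eqt s t) ->
     G (add (add A s) t) \/ G (add (add A (Neg s)) (Neg t));
  acc_BE : forall A, G A -> forall s t : tm o, A (Neq s t) ->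
     G (add (add A s) (Neg t)) \/ G (add (add A (Neg s)) t);
  acc_FQ : forall A, G A -> forall s t (f g : tm (Arr s t)), A (Eqt f g) ->
     forall u : tm s, normal nf u -> G (add A (Eqt (nf t (App f u)) (nf t (App g u))));
  acc_FE : forall A, G A -> forall s t (f g : tm (Arr s t)), A (Neq f g) ->
     exists n : nat,
       G (add A (Neq (nf t (App f (Nm (NVar s n)))) (nf t (App g (Nm (NVar s n))))));
  acc_Mat : forall A, G A -> forall (s : ty) (n : nat) (u v : tm o),
     head u = Some (NVar s n) -> head v = Some (NVar s n) ->
     A u -> A (Neg v) -> some_arg (fun r a c => G (add A (Neq a c))) u v;
  acc_Dec : forall A, G A -> forall (al : B), al <> bo ->
     forall (s : ty) (n : nat) (u v : tm (Base al)),
     head u = Some (NVar s n) -> head v = Some (NVar s n) ->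
     A (Neq u v) -> some_arg (fun r a c => G (add A (Neq a c))) u v;
  acc_Con : forall A, G A -> forall (al : B), al <> bo ->
     forall s t u v : tm (Base al), A (Eqt s t) -> A (Neq u v) ->
     G (add (add A (Neq s u)) (Neq t u)) \/ G (add (add A (Neq s v)) (Neq t v)) }.

Definition complete (nf : forall s, tm s -> tm s) (G : (tm o -> Prop) -> Prop) : Prop :=
  forall A, G A -> forall s : tm o, normal nf s -> G (add A s) \/ G (add A (Neg s)).

End STT.

(* Main.v *)
Require Import Defs.
From mathcomp Require Import all_boot.
From Stdlib Require Import Eqdep_dec Classical ClassicalEpsilon FunctionalExtensionality PropExtensionality ProofIrrelevance Program.Equality.
From Stdlib Require Cantor.
From mathcomp Require classical_sets.
Set Implicit Arguments.
Unset Strict Implicit.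
Unset Printing Implicit Defensive.

Section Basics.
Variable B : countType.
Variable bo : B.
Local Notation ty := (ty B).
Local Notation tm := (tm bo).
Local Notation name := (name B).
Local Notation o := (o bo).

Lemma tyUIP (s : ty) (e : s = s) : e = erefl.
Proof. apply: UIP_dec; exact: ty_eq_dec. Qed.

Lemma nameUIP (x : name) (e : x = x) : e = erefl.
Proof. apply: UIP_dec; exact: name_eq_dec. Qed.

Lemma tm_inj (s : ty) (u v : tm s) : existT (fun s => tm s) s u = existT _ s v -> u = v.
Proof. apply: inj_pair2_eq_dec; exact: ty_eq_dec. Qed.

Lemma upd_same (F : frame B) (I : asg bo F) x a : @upd _ _ _ I x a x = a.
Proof. rewrite /upd; case: (name_eq_dec x x) => [e|//]; by rewrite (nameUIP e). Qed.

Lemma upd_other (F : frame B) (I : asg bo F) x a y : x <> y -> @upd _ _ _ I x a y = I y.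
Proof. rewrite /upd; by case: (name_eq_dec x y). Qed.

Lemma supd_same (th : sub bo) x (t : tm (nty bo x)) : @supd _ _ th x t x = Some t.
Proof. rewrite /supd; case: (name_eq_dec x x) => [e|//]; by rewrite (nameUIP e). Qed.

Lemma supd_other (th : sub bo) x (t : tm (nty bo x)) y : x <> y -> @supd _ _ th x t y = th y.
Proof. rewrite /supd; by case: (name_eq_dec x y). Qed.

Lemma ev_inv (F : frame B) (I : asg bo F) s (t : tm s) b : ev I t b ->
  match t in Defs.tm _ s0 return dom F s0 -> Prop with
  | Nm x => fun b => b = I x
  | App _ _ u v => fun b => exists f a, ev I u f /\ ev I v a /\ b = app f a
  | Lam x _ u => fun f => forall a, ev (@upd _ _ _ I x a) u (app f a)
  end b.
Proof. case => //= {I s t b}; move=> I s t u v f a Hu Hv; by exists f, a. Qed.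

Lemma ev_fun (F : frame B) (I : asg bo F) s (t : tm s) a b : ev I t a -> ev I t b -> a = b.
Proof.
elim: t I a b => [x|s0 t0 u IHu v IHv|x t0 u IHu] I a b Ha Hb.
- by rewrite (ev_inv Ha) (ev_inv Hb).
- move: (ev_inv Ha) (ev_inv Hb) => [f [c [H1 [H2 ->]]]] [f' [c' [H1' [H2' ->]]]].
  by rewrite (IHu _ _ _ H1 H1') (IHv _ _ _ H2 H2').
- move: (ev_inv Ha) (ev_inv Hb) => /= H1 H2.
  apply: app_ext => c; exact: IHu _ _ _ (H1 c) (H2 c).
Qed.

End Basics.


Lemma clique_max (T : Type) (Q : T -> Prop) (R : T -> T -> Prop) (S : T -> Prop) :
  (forall u, S u -> Q u) -> (forall u v, S u -> S v -> R u v) ->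
  exists a : T -> Prop, (forall u, S u -> a u) /\ (forall u, a u -> Q u) /\
    (forall u v, a u -> a v -> R u v) /\
    (forall u, Q u -> R u u -> (forall v, a v -> R u v /\ R v u) -> a u).
Proof.
move=> SQ SR.
pose P := fun X : T -> Prop => (forall u, S u \/ X u -> Q u) /\
  (forall u v, S u \/ X u -> S v \/ X v -> R u v).
have [A [[PA1 PA2] PAm]] : exists A, P A /\ (forall B, classical_sets.proper A B -> ~ P B).
  apply: classical_sets.Zorn_bigcup => F FP Ftot; split.
  - move=> u [/SQ //|[X FX Xu]]; by case: (FP X FX) => H _; apply: H; right.
  - move=> u v [Su|[X FX Xu]] [Sv|[Y FY Yv]].
    + exact: SR.
    + by case: (FP Y FY) => _ H; apply: H; [left|right].
    + by case: (FP X FX) => _ H; apply: H; [right|left].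
    + case: (Ftot X Y FX FY) => [XY|YX].
      * by case: (FP Y FY) => _ H; apply: H; right => //; apply: XY.
      * by case: (FP X FX) => _ H; apply: H; right => //; apply: YX.
exists (fun u => S u \/ A u); split; [by move=> u; left|split; [exact: PA1|split; [exact: PA2|]]].
move=> u Qu Ruu Hu; right; apply: NNPP => nAu.
apply: (PAm (fun w => A w \/ w = u)).
- apply: conj.
  + by move=> w Aw; left.
  + by move=> H; case: (nAu (H u (or_intror erefl))).
- split.
  + by move=> w [Sw|[Aw|->]] //; apply: PA1; [left|right].
  + move=> w1 w2 [Sw1|[Aw1| ->]] [Sw2|[Aw2| ->]] //;
      try (apply: PA2; by [left|right]);
      try (by case: (Hu w1 (or_introl Sw1)));
      try (by case: (Hu w1 (or_intror Aw1)));
      try (by case: (Hu w2 (or_introl Sw2)));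
      try (by case: (Hu w2 (or_intror Aw2))).
Qed.


Section Model.
Variable B : countType.
Variable bo : B.
Local Notation ty := (ty B).
Local Notation tm := (tm bo).
Local Notation name := (name B).
Local Notation o := (o bo).

Variable nf : forall s, tm s -> tm s.
Hypothesis HN : is_normalization nf.

Lemma nf_idem s (t : tm s) : nf (nf t) = nf t.
Proof. by case: HN. Qed.
Lemma nf_app s t (u : tm (Arr s t)) v : nf (App (nf u) v) = nf (App u v).
Proof. by case: HN => _ []. Qed.
Lemma nf_head b (t : tm (Base b)) x : Defs.head t = Some x -> nf t = argnorm nf t.
Proof. by case: HN => _ [_ [H _]]; apply: H. Qed.
Lemma head_argnorm s (t : tm s) : Defs.head (argnorm nf t) = Defs.head t.
Proof. by elim: t => //= s0 t0 u IH. Qed.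
Lemma nf_Neg (s : tm o) : nf (Neg s) = Neg (nf s).
Proof. by rewrite (@nf_head bo (Neg s) (NNeg B)). Qed.
Lemma nf_Eqt s (a c : tm s) : nf (Eqt a c) = Eqt (nf a) (nf c).
Proof. by rewrite (@nf_head bo (Eqt a c) (NEq s)). Qed.
Lemma nf_Neq s (a c : tm s) : nf (Neq a c) = Neq (nf a) (nf c).
Proof. by rewrite /Neq nf_Neg nf_Eqt. Qed.

Lemma Neg_inj (a c : tm o) : Neg a = Neg c -> a = c.
Proof. move=> H; injection H => /tm_inj //. Qed.
Lemma Eqt_inj s (a c a' c' : tm s) : Eqt a c = Eqt a' c' -> a = a' /\ c = c'.
Proof. move=> H; injection H => /tm_inj H1 /tm_inj H2; done. Qed.

Lemma some_arg_app P s t (u v : tm (Arr s t)) a c :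
  some_arg P (App u a) (App v c) -> P s a c \/ some_arg P u v.
Proof. move=> H. dependent destruction H. by left. by right. Qed.
Lemma some_arg_nm P x (v : tm (nty bo x)) : ~ some_arg P (Nm bo x) v.
Proof. move=> H. dependent destruction H. Qed.

Variable E : tm o -> Prop.
Hypothesis Enorm : forall s, E s -> nf s = s.
Hypothesis HDN : forall s, E (Neg (Neg s)) -> E s.
Hypothesis HBQ : forall s t : tm o, E (Eqt s t) -> (E s /\ E t) \/ (E (Neg s) /\ E (Neg t)).
Hypothesis HBE : forall s t : tm o, E (Neq s t) -> (E s /\ E (Neg t)) \/ (E (Neg s) /\ E t).
Hypothesis HFQ : forall s t (f g : tm (Arr s t)), E (Eqt f g) -> forall u : tm s, nf u = u ->
  E (Eqt (nf (App f u)) (nf (App g u))).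
Hypothesis HFE : forall s t (f g : tm (Arr s t)), E (Neq f g) -> exists n : nat,
  E (Neq (nf (App f (Nm bo (NVar s n)))) (nf (App g (Nm bo (NVar s n))))).
Hypothesis HMat : forall (s : ty) (n : nat) (u v : tm o),
  Defs.head u = Some (NVar s n) -> Defs.head v = Some (NVar s n) ->
  E u -> E (Neg v) -> some_arg (fun r a c => E (Neq a c)) u v.
Hypothesis HDec : forall (al : B), al <> bo -> forall (s : ty) (n : nat) (u v : tm (Base al)),
  Defs.head u = Some (NVar s n) -> Defs.head v = Some (NVar s n) ->
  E (Neq u v) -> some_arg (fun r a c => E (Neq a c)) u v.
Hypothesis HCon : forall (al : B), al <> bo -> forall s t u v : tm (Base al),
  E (Eqt s t) -> E (Neq u v) -> (E (Neq s u) /\ E (Neq t u)) \/ (E (Neq s v) /\ E (Neq t v)).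

Lemma E_Eqt_nrm s (a c : tm s) : E (Eqt a c) -> nf a = a /\ nf c = c.
Proof. by move=> /Enorm; rewrite nf_Eqt => /Eqt_inj. Qed.
Lemma E_Neg_nrm (a : tm o) : E (Neg a) -> nf a = a.
Proof. by move=> /Enorm; rewrite nf_Neg => /Neg_inj. Qed.
Lemma E_Neq_nrm s (a c : tm s) : E (Neq a c) -> nf a = a /\ nf c = c.
Proof. by move=> /Enorm; rewrite nf_Neq => /Neg_inj /Eqt_inj. Qed.

Definition castO (b : B) (e : b = bo) (u : tm (Base b)) : tm o :=
  eq_rect b (fun b => tm (Base b)) u bo e.

Fixpoint cmp (s : ty) : tm s -> tm s -> Prop :=
  match s with
  | Base b => fun u v => match eq_comparable b bo with
      | left e => ~ (E (castO e (nf u)) /\ E (Neg (castO e (nf v)))) /\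
                  ~ (E (Neg (castO e (nf u))) /\ E (castO e (nf v)))
      | right _ => ~ E (Neq (nf u) (nf v)) /\ ~ E (Neq (nf v) (nf u))
      end
  | Arr s1 s2 => fun u v => forall a c, cmp a a -> cmp c c -> cmp a c -> cmp (App u a) (App v c)
  end.

Lemma eqc_bo : eq_comparable bo bo = left erefl.
Proof. case: eq_comparable => [e|n]; [by rewrite (eq_irrelevance e erefl) | by case: n]. Qed.

Lemma cmpO (u v : tm o) : cmp u v <-> ~ (E (nf u) /\ E (Neg (nf v))) /\ ~ (E (Neg (nf u)) /\ E (nf v)).
Proof. by rewrite /Defs.o /= eqc_bo. Qed.

Lemma cmpA al (ne : al <> bo) (u v : tm (Base al)) :
  cmp u v <-> ~ E (Neq (nf u) (nf v)) /\ ~ E (Neq (nf v) (nf u)).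
Proof. by rewrite /=; case: eq_comparable. Qed.

Lemma cmp_nf s (u v : tm s) : cmp u v <-> cmp (nf u) (nf v).
Proof.
elim: s u v => [b|s1 IH1 s2 IH2] u v.
- by rewrite /= !nf_idem.
- rewrite /=; split => H a c Ha Hc Hac.
  + by rewrite IH2 !nf_app -IH2; apply: H.
  + by rewrite IH2 -(nf_app u) -(nf_app v) -IH2; apply: H.
Qed.

Lemma cmp_sym s (u v : tm s) : cmp u v -> cmp v u.
Proof.
elim: s u v => [b|s1 IH1 s2 IH2] u v.
- rewrite /=; case: eq_comparable => e; tauto.
- move=> /= H a c Ha Hc Hac; apply: IH2; apply: H => //; exact: IH1.
Qed.

Inductive SC : forall s, tm s -> tm s -> Prop :=
| SC_var s n : @SC s (Nm bo (NVar s n)) (Nm bo (NVar s n))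
| SC_app s t (h h' : tm (Arr s t)) (a c : tm s) : SC h h' -> cmp a c ->
    (forall a c : tm s, cmp a c -> ~ E (Neq (nf a) (nf c))) -> SC (App h a) (App h' c).

Lemma SC_head s (h h' : tm s) : SC h h' -> exists s0 n, Defs.head h = Some (NVar s0 n) /\ Defs.head h' = Some (NVar s0 n).
Proof. elim => [s0 n|s0 t h0 h0' a c _ IH _ _] /=; [by exists s0, n | exact: IH]. Qed.

Lemma SC_sym s (h h' : tm s) : SC h h' -> SC h' h.
Proof. elim => [s0 n|s0 t h0 h0' a c _ IH Hac HN0]; first exact: SC_var.
apply: SC_app => //; exact: cmp_sym. Qed.

Lemma SC_noarg s (h h' : tm s) : SC h h' ->
  ~ some_arg (fun r a c => E (Neq a c)) (argnorm nf h) (argnorm nf h').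
Proof.
elim => [s0 n|s0 t h0 h0' a c _ IH Hac HN0] /=; first exact: (@some_arg_nm _ (NVar s0 n)).
by move=> /some_arg_app [/(HN0 _ _ Hac)|/IH].
Qed.

Lemma VN s : (forall h h' : tm s, SC h h' -> cmp h h') /\
             (forall u v : tm s, cmp u v -> ~ E (Neq (nf u) (nf v))).
Proof.
elim: s => [b|s1 [IHV1 IHN1] s2 [IHV2 IHN2]].
- split.
  + move=> h h' H; have [x [n [Hh Hh']]] := SC_head H.
    have Hn : ~ some_arg (fun r a c => E (Neq a c)) (argnorm nf h) (argnorm nf h') := SC_noarg H.
    have Hn' : ~ some_arg (fun r a c => E (Neq a c)) (argnorm nf h') (argnorm nf h) := SC_noarg (SC_sym H).
    rewrite /= (nf_head Hh) (nf_head Hh'); case: eq_comparable => [e|ne].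
    * subst b => /=; split => -[H1 H2].
      -- by apply: Hn; apply: (HMat (s := x) (n := n)) => //; rewrite head_argnorm.
      -- by apply: Hn'; apply: (HMat (s := x) (n := n)) => //; rewrite head_argnorm.
    * split => H1.
      -- by apply: Hn; apply: (HDec ne (s := x) (n := n)) => //; rewrite head_argnorm.
      -- by apply: Hn'; apply: (HDec ne (s := x) (n := n)) => //; rewrite head_argnorm.
  + move=> u v; rewrite /=; case: eq_comparable => [e|ne]; last by case.
    subst b => /= -[H1 H2] H.
    case: (HBE H) => [[Ha Hb]|[Ha Hb]]; [exact: H1|exact: H2].
- split.
  + move=> h h' H a c Ha Hc Hac; apply: IHV2; exact: SC_app.
  + move=> u v Huv H; case: (HFE H) => n.
    rewrite !nf_app; apply: IHN2; apply: Huv; try apply: IHV1; exact: SC_var.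
Qed.


Definition disc (b : B) (a : tm (Base b) -> Prop) : Prop :=
  (forall u, a u -> nf u = u) /\ (forall u v, a u -> a v -> cmp u v) /\
  (forall u, nf u = u -> cmp u u -> (forall v, a v -> cmp u v) -> a u).

Definition okb (b : B) (p : bool * (tm (Base b) -> Prop)) : Prop :=
  match eq_comparable b bo with
  | left _ => p.2 = (fun _ => False)
  | right _ => p.1 = false /\ disc p.2
  end.

Definition Dbase (b : B) := {p : bool * (tm (Base b) -> Prop) | okb p}.

Definition pvb (b : B) (u : tm (Base b)) (p : Dbase b) : Prop :=
  match eq_comparable b bo with
  | left e => if (sval p).1 then ~ E (Neg (castO e (nf u))) else ~ E (castO e (nf u))
  | right _ => (sval p).2 (nf u)
  end.

Fixpoint Dp (s : ty) : {T : Type & tm s -> T -> Prop} :=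
  match s with
  | Base b => existT _ (Dbase b) (@pvb b)
  | Arr s1 s2 => existT (fun T => tm (Arr s1 s2) -> T -> Prop)
      {f : projT1 (Dp s1) -> projT1 (Dp s2) |
         exists u : tm (Arr s1 s2), forall w a, projT2 (Dp s1) w a -> projT2 (Dp s2) (App u w) (f a)}
      (fun u f => forall w a, projT2 (Dp s1) w a -> projT2 (Dp s2) (App u w) (sval f a))
  end.

Definition Dom (s : ty) : Type := projT1 (Dp s).
Definition pv (s : ty) : tm s -> Dom s -> Prop := projT2 (Dp s).

Lemma okO c : okb (b := bo) (c, fun _ => False).
Proof. by rewrite /okb eqc_bo. Qed.

Definition mkO (c : bool) : Dom o := exist _ (c, fun _ => False) (okO c).
Definition bO (p : Dom o) : bool := (sval p).1.

Lemma bO_mkO c : bO (mkO c) = c. Proof. by []. Qed.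
Lemma mkO_bO p : mkO (bO p) = p.
Proof.
case: p => [[c a] H]; rewrite /mkO /bO /=.
have ea : a = (fun _ => False) by move: H; rewrite /okb eqc_bo.
subst a; congr exist; exact: proof_irrelevance.
Qed.

Lemma pvO (u : tm o) (p : Dom o) : pv u p <-> if bO p then ~ E (Neg (nf u)) else ~ E (nf u).
Proof. by rewrite /pv /Defs.o /= /pvb eqc_bo. Qed.

Lemma pvA al (ne : al <> bo) (u : tm (Base al)) (p : Dom (Base al)) : pv u p <-> (sval p).2 (nf u).
Proof. by rewrite /pv /= /pvb; case: eq_comparable. Qed.

Lemma discA al (ne : al <> bo) (p : Dom (Base al)) : (sval p).1 = false /\ disc (sval p).2.
Proof. case: p => p /=; by rewrite /okb; case: eq_comparable. Qed.

Lemma okA al (ne : al <> bo) a : disc a -> okb (b := al) (false, a).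
Proof. by move=> H; rewrite /okb; case: eq_comparable. Qed.

Definition mkA al (ne : al <> bo) a (H : disc a) : Dom (Base al) := exist _ (false, a) (okA ne H).

Lemma eqA al (ne : al <> bo) (p q : Dom (Base al)) : (forall u, (sval p).2 u <-> (sval q).2 u) -> p = q.
Proof.
move=> H; case: (discA ne p) (discA ne q) => [p1 _] [q1 _].
case: p q H p1 q1 => [[c a] Hp] [[c' a'] Hq] /= H p1 q1; subst c c'.
have ea : a = a' by apply: functional_extensionality => u; apply: propositional_extensionality.
subst a'; congr exist; exact: proof_irrelevance.
Qed.

Lemma eqArr s t (f g : Dom (Arr s t)) : (forall a, sval f a = sval g a) -> f = g.
Proof.
case: f g => [f Hf] [g Hg] /= H.
have efg : f = g by apply: functional_extensionality.
subst g; congr exist; exact: proof_irrelevance.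
Qed.

Lemma pv_nf s (u : tm s) a : pv u a <-> pv (nf u) a.
Proof.
elim: s u a => [b|s1 IH1 s2 IH2] u a.
- by rewrite /pv /= /pvb nf_idem.
- rewrite /pv /=; split => H w c Hw.
  + by rewrite -/(pv _ _) IH2 nf_app -IH2; apply: H.
  + by rewrite -/(pv _ _) IH2 -(nf_app u) -IH2; apply: H.
Qed.


Lemma cmp_var s n : cmp (Nm bo (NVar s n)) (Nm bo (NVar s n)).
Proof. case: (VN s) => H _; apply: H; exact: SC_var. Qed.

Lemma QR s : (forall T : tm s -> Prop, (forall u v, T u -> T v -> cmp u v) ->
                exists a : Dom s, forall u, T u -> pv u a) /\
             (forall u v (a : Dom s), pv u a -> pv v a -> cmp u v).
Proof.
elim: s => [b|s1 [Q1 R1] s2 [Q2 R2]].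
- case: (eq_comparable b bo) => [e|ne].
  + subst b; split.
    * move=> T HT; case: (classic (exists t, T t /\ E (nf t))) => [[t0 [Tt0 Et0]]|nE].
      -- exists (mkO true) => u Tu; rewrite pvO /= => H.
         by move: (HT t0 u Tt0 Tu); rewrite cmpO => -[H1 _]; apply: H1.
      -- exists (mkO false) => u Tu; rewrite pvO /= => H; apply: nE; by exists u.
    * move=> u v a; rewrite !pvO cmpO; case: (bO a) => H1 H2; tauto.
  + split.
    * move=> T HT.
      have [a [Sa [aQ [aR am]]]] := @clique_max (tm (Base b)) (fun u => nf u = u) (@cmp (Base b))
          (fun u => exists t, T t /\ u = nf t)
          (fun u '(ex_intro t (conj _ e)) => ltac:(by rewrite e nf_idem))
          (fun u v '(ex_intro t (conj Tt e)) '(ex_intro t' (conj Tt' e')) =>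
             ltac:(by rewrite e e' -cmp_nf; apply: HT)).
      have Hd : disc a.
        split; first exact: aQ. split; first exact: aR.
        move=> u Nu Cu Hu; apply: am => // v av; split; [exact: Hu|exact: cmp_sym (Hu v av)].
      exists (mkA ne Hd) => u Tu; rewrite (pvA ne) /=; exact: (Sa _ (ex_intro _ u (conj Tu erefl))).
    * move=> u v p; rewrite !(pvA ne) => Hu Hv.
      case: (discA ne p) => _ [_ [Hc _]]; rewrite cmp_nf; exact: Hc.
- split.
  + move=> T HT.
    pose x := Nm bo (NVar (Arr s1 s2) 0).
    pose T' := fun u => T u \/ (~ (exists w, T w) /\ u = x).
    have HT' : forall u v, T' u -> T' v -> cmp u v.
      move=> u v [Tu|[nT ->]] [Tv|[nT' ->]].
      * exact: HT.
      * by case: nT'; exists u.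
      * by case: nT; exists v.
      * exact: cmp_var.
    have [u0 Tu0] : exists u0, T' u0.
      case: (classic (exists w, T w)) => [[w Tw]|nT]; [by exists w; left|by exists x; right].
    pose Ta := fun (a : Dom s1) (w : tm s2) => exists u t, T' u /\ pv t a /\ w = App u t.
    have HTa : forall a u v, Ta a u -> Ta a v -> cmp u v.
      move=> a _ _ [u [t [Tu [Ht ->]]]] [u' [t' [Tu' [Ht' ->]]]].
      apply: HT' => //; apply: R1; eassumption.
    pose F := fun a => proj1_sig (constructive_indefinite_description _ (Q2 _ (HTa a))).
    have HF : forall a u t, T' u -> pv t a -> pv (App u t) (F a).
      move=> a u t Tu Ht; rewrite /F; case: constructive_indefinite_description => /= b Hb.
      apply: Hb; by exists u, t.
    have Fok : exists u : tm (Arr s1 s2), forall w a, pv w a -> pv (App u w) (F a).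
      exists u0 => w a Hw; exact: HF.
    exists (exist _ F Fok : Dom (Arr s1 s2)) => u Tu w a Hw /=.
    apply: HF => //; by left.
  + move=> u v f Hu Hv a c Ha Hc Hac.
    have [d Hd] := Q1 (fun w => w = a \/ w = c)
      (fun w1 w2 H1 H2 => ltac:(case: H1 H2 => -> [] ->; by [|apply: cmp_sym])).
    apply: (R2 _ _ (sval f d)); [apply: Hu|apply: Hv]; apply: Hd; by [left|right].
Qed.


Lemma pv_ex s (u : tm s) : cmp u u -> exists a, pv u a.
Proof.
move=> H; case: (QR s) => Q _.
have [a Ha] := Q (fun w => w = u) (fun w1 w2 e1 e2 => ltac:(by rewrite e1 e2)).
by exists a; apply: Ha.
Qed.

Lemma pv_cmp s (u : tm s) a : pv u a -> cmp u u.
Proof. move=> Hu; case: (QR s) => _ R; exact: (R u u a Hu Hu). Qed.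


Lemma nf_varB b n : nf (Nm bo (NVar (Base b) n) : tm (Base b)) = Nm bo (NVar (Base b) n).
Proof. by rewrite (@nf_head b _ (NVar (Base b) n)). Qed.

Lemma W s (a : Dom s) : exists u, pv u a.
Proof.
elim: s a => [b|s1 _ s2 _] a.
- case: (eq_comparable b bo) => [e|ne].
  + subst b.
    pose p : tm o := Nm bo (NVar o 0).
    have Np : nf p = p by exact: nf_varB.
    have Cp := cmp_var o 0; rewrite -/p cmpO Np in Cp.
    rewrite -(mkO_bO a); case: (bO a).
    * case: (classic (E (Neg p))) => Hn.
      -- exists (Neg p); rewrite pvO /= nf_Neg Np => /HDN Hp; case: Cp => H _; by apply: H.
      -- by exists p; rewrite pvO /= Np.
    * case: (classic (E p)) => Hp.
      -- exists (Neg p); rewrite pvO /= nf_Neg Np => Hn; case: Cp => H _; by apply: H.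
      -- by exists p; rewrite pvO /= Np.
  + case: (discA ne a) => _ [aN [aC am]].
    case: (classic (exists v, (sval a).2 v)) => [[v av]|nv].
    * exists v; rewrite (pvA ne) (aN _ av) //.
    * exists (Nm bo (NVar (Base b) 0)); rewrite (pvA ne) nf_varB; apply: am.
      -- exact: nf_varB.
      -- exact: cmp_var.
      -- move=> v av; case: nv; by exists v.
- case: a => f [u Hu]; by exists u.
Qed.

Lemma disc_N al (ne : al <> bo) (p : Dom (Base al)) (s0 : tm (Base al)) :
  (sval p).2 s0 ->
  (forall u v, nf u = u -> nf v = v -> cmp u s0 -> cmp v s0 -> cmp u v) ->
  forall u, (sval p).2 u <-> (nf u = u /\ cmp u s0).
Proof.
move=> Hs Hcl u; case: (discA ne p) => _ [aN [aC am]]; split.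
- move=> Hu; split; [exact: aN|exact: aC].
- move=> [Nu Cu]; apply: am => //; first exact: Hcl.
  move=> v av; apply: Hcl => //; [exact: aN| exact: aC].
Qed.

Lemma EqA s (u v : tm s) a c : E (Eqt u v) -> pv u a -> pv v c -> a = c.
Proof.
elim: s u v a c => [b|s1 _ s2 IH2] u v a c H.
- have [Nu Nv] := E_Eqt_nrm H.
  case: (eq_comparable b bo) => [e|ne].
  + subst b; rewrite !pvO Nu Nv => Ha Hc.
    rewrite -(mkO_bO a) -(mkO_bO c); congr mkO.
    case: (HBQ H) => [[Eu Ev]|[Eu Ev]].
    * by move: Ha Hc; case: (bO a); case: (bO c).
    * by move: Ha Hc; case: (bO a); case: (bO c).
  + move=> Ha Hc.
    have Cu := pv_cmp Ha; have Cv := pv_cmp Hc.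
    rewrite (pvA ne) Nu in Ha; rewrite (pvA ne) Nv in Hc.
    have Con1 : forall w z : tm (Base b), E (Neq w z) -> E (Neq u w) /\ E (Neq v w) \/ E (Neq u z) /\ E (Neq v z).
      move=> w z Hwz; exact: (@HCon b ne u v w z H Hwz).
    have CA := cmpA ne; rewrite CA Nu in Cu; rewrite CA Nv in Cv.
    have key : forall w, nf w = w -> (cmp w u <-> cmp w v).
      move=> w Nw; rewrite !CA Nw Nu Nv; split => -[H1 H2]; split => H3.
      * case: (Con1 _ _ H3) => [[H4 H5]|[H4 H5]]; [by apply: H2|by case: Cv].
      * case: (Con1 _ _ H3) => [[H4 H5]|[H4 H5]]; [by case: Cv|by apply: H2].
      * case: (Con1 _ _ H3) => [[H4 H5]|[H4 H5]]; [by apply: H2|by case: Cu].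
      * case: (Con1 _ _ H3) => [[H4 H5]|[H4 H5]]; [by case: Cu|by apply: H2].
    have clu : forall w z, nf w = w -> nf z = z -> cmp w u -> cmp z u -> cmp w z.
      move=> w z Nw Nz; rewrite !CA Nw Nz Nu => -[H1 H2] [H3 H4]; split => H5.
      * by case: (Con1 _ _ H5) => [[H6 _]|[H6 _]]; [apply: H2|apply: H4].
      * by case: (Con1 _ _ H5) => [[H6 _]|[H6 _]]; [apply: H4|apply: H2].
    have clv : forall w z, nf w = w -> nf z = z -> cmp w v -> cmp z v -> cmp w z.
      move=> w z Nw Nz Hw Hz; apply: clu => //; by rewrite key.
    apply: (eqA ne) => w; rewrite (disc_N ne Ha clu) (disc_N ne Hc clv).
    split => -[Nw Hw]; split => //; by [rewrite -key|rewrite key].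
- move=> Ha Hc; apply: eqArr => d.
  have [w Hw] := W d; rewrite pv_nf in Hw.
  have Nw : nf (nf w) = nf w := nf_idem w.
  apply: (IH2 _ _ _ _ (HFQ H Nw)); rewrite -pv_nf; [exact: Ha|exact: Hc].
Qed.

Lemma EqB s (u v : tm s) a : pv u a -> pv v a -> ~ E (Neq (nf u) (nf v)).
Proof.
move=> Hu Hv; case: (VN s) => _ N; apply: N; case: (QR s) => _ R; exact: R _ _ _ Hu Hv.
Qed.

Lemma Uniq (Hc : forall s : tm o, nf s = s -> E s \/ E (Neg s)) s (u : tm s) a c :
  pv u a -> pv u c -> a = c.
Proof.
elim: s u a c => [b|s1 _ s2 IH2] u a c.
- case: (eq_comparable b bo) => [e|ne].
  + subst b; rewrite !pvO => Ha Hb; rewrite -(mkO_bO a) -(mkO_bO c); congr mkO.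
    case: (Hc (nf u) (nf_idem u)) => H; move: Ha Hb; case: (bO a); case: (bO c) => //; tauto.
  + move=> Ha Hb; set s0 := nf u.
    have Ns0 : nf s0 = s0 := nf_idem u.
    rewrite (pvA ne) in Ha; rewrite (pvA ne) in Hb.
    have CA := cmpA ne.
    have cl : forall w z, nf w = w -> nf z = z -> cmp w s0 -> cmp z s0 -> cmp w z.
      move=> w z Nw Nz.
      have Hw' : forall x, nf x = x -> cmp x s0 -> E (Eqt s0 x).
        move=> x Nx; rewrite CA Nx Ns0 => -[H1 H2].
        have : nf (Eqt s0 x) = Eqt s0 x by rewrite nf_Eqt Ns0 Nx.
        by move=> /Hc [//|H3]; case: H2.
      move=> Hw Hz; rewrite CA Nw Nz; have Ew := Hw' _ Nw Hw; have Ez := Hw' _ Nz Hz.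
      rewrite CA Nw Ns0 in Hw; rewrite CA Nz Ns0 in Hz.
      case: Hw => Hw1 Hw2; case: Hz => Hz1 Hz2.
      split => H5.
      * by case: (@HCon b ne _ _ _ _ Ew H5) => [[H6 _]|[H6 _]]; [apply: Hw2|apply: Hz2].
      * by case: (@HCon b ne _ _ _ _ Ez H5) => [[H6 _]|[H6 _]]; [apply: Hz2|apply: Hw2].
    apply: (eqA ne) => w; by rewrite (disc_N ne Ha cl) (disc_N ne Hb cl).
- move=> Ha Hb; apply: eqArr => d.
  have [w Hw] := W d; apply: (IH2 (App u w)); [exact: Ha|exact: Hb].
Qed.


Lemma negF_pv (w : tm o) a : pv w a -> pv (Neg w) (mkO (~~ bO a)).
Proof.
rewrite !pvO bO_mkO nf_Neg; case: (bO a) => //= H; by move=> /HDN.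
Qed.

Lemma negF_ok : exists u : tm (Arr o o), forall w (a : Dom o), pv w a -> pv (App u w) (mkO (~~ bO a)).
Proof. exists (Nm bo (NNeg B)) => w a; exact: negF_pv. Qed.

Definition negF : Dom (Arr o o) := exist _ (fun a => mkO (~~ bO a)) negF_ok.

Definition decE s (a c : Dom s) : bool := if excluded_middle_informative (a = c) then true else false.

Lemma decE_spec s (a c : Dom s) : decE a c = true <-> a = c.
Proof. rewrite /decE; by case: excluded_middle_informative. Qed.

Lemma eq_pv s (w z : tm s) a c : pv w a -> pv z c -> pv (Eqt w z) (mkO (decE a c)).
Proof.
move=> Hw Hz; rewrite pvO bO_mkO nf_Eqt /decE; case: excluded_middle_informative => [e|ne].
- subst c; exact: EqB Hw Hz.
- move=> H; apply: ne; apply: EqA H _ _; by rewrite -pv_nf.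
Qed.

Lemma eqF_in_ok s (a : Dom s) : exists u : tm (Arr s o), forall z c, pv z c -> pv (App u z) (mkO (decE a c)).
Proof. have [w Hw] := W a; exists (App (Nm bo (NEq s)) w) => z c Hz; exact: eq_pv. Qed.

Definition eqF_in s (a : Dom s) : Dom (Arr s o) := exist _ (fun c => mkO (decE a c)) (eqF_in_ok a).

Lemma eqF_ok s : exists u : tm (Arr s (Arr s o)), forall w a, pv w a -> pv (App u w) (eqF_in a).
Proof. exists (Nm bo (NEq s)) => w a Hw z c Hz; exact: eq_pv. Qed.

Definition eqF s : Dom (Arr s (Arr s o)) := exist _ (@eqF_in s) (eqF_ok s).

Definition appD s t (f : Dom (Arr s t)) (a : Dom s) : Dom t := sval f a.

Lemma appD_ext s t (f g : Dom (Arr s t)) : (forall a, appD f a = appD g a) -> f = g.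
Proof. exact: eqArr. Qed.

Lemma Dom_ne s : inhabited (Dom s).
Proof. have [a _] := pv_ex (cmp_var s 0); exact: inhabits a. Qed.

Definition FM : frame B := @Frame B Dom appD appD_ext Dom_ne.

Definition varv s n : Dom s := proj1_sig (constructive_indefinite_description _ (pv_ex (cmp_var s n))).

Definition I0 : asg bo FM := fun y => match y as y0 return Dom (nty bo y0) with
  | NVar s n => varv s n
  | NNeg => negF
  | NEq s => eqF s
  end.

Lemma I0_pv y : pv (Nm bo y) (I0 y).
Proof.
case: y => [s n||s] /=.
- rewrite /varv; by case: constructive_indefinite_description.
- move=> w a; exact: negF_pv.
- move=> w a Hw z c Hz; exact: eq_pv.
Qed.

Variable sb : sub bo -> forall s, tm s -> tm s.
Hypothesis HS : is_subst nf sb.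

Definition thv (th : sub bo) (y : name) : tm (nty bo y) :=
  match th y with Some u => u | None => Nm bo y end.

Lemma thv_upd (th : sub bo) x (w : tm (nty bo x)) (I : asg bo FM) (a : Dom (nty bo x)) :
  pv w a -> (forall y, pv (thv th y) (I y)) ->
  forall y, pv (thv (@supd _ _ th x w) y) (@upd _ _ FM I x a y).
Proof.
move=> Hw Hth y; case: (name_eq_dec x y) => [e|ne].
- subst y; by rewrite /thv supd_same upd_same.
- by rewrite /thv supd_other // upd_other.
Qed.

Lemma adm s (t : tm s) : forall (I : asg bo FM) (th : sub bo), (forall y, pv (thv th y) (I y)) ->
  exists a, ev I t a /\ pv (sb th t) a.
Proof.
case: HS => S1 [S2 [S3 S4]].
elim: t => [x|s0 t0 u IHu v IHv|x t0 u IHu] I th Hth.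
- exists (I x); split; first exact: ev_Nm.
  rewrite S1; exact: Hth.
- have [f [Hf Pf]] := IHu I th Hth; have [a [Ha Pa]] := IHv I th Hth.
  exists (appD f a); split; first exact: ev_App.
  rewrite S2; exact: Pf.
- have Hex : forall a, exists b, ev (@upd _ _ FM I x a) u b.
    move=> a; have [w Hw] := W a.
    have [b [Hb _]] := IHu _ _ (thv_upd Hw Hth); by exists b.
  pose g := fun a => proj1_sig (constructive_indefinite_description _ (Hex a)).
  have Hg : forall a, ev (@upd _ _ FM I x a) u (g a).
    move=> a; rewrite /g; by case: constructive_indefinite_description.
  have key : forall w a, pv w a -> pv (App (sb th (Lam x u)) w) (g a).
    move=> w a Hw; have [b [Hb Pb]] := IHu _ _ (thv_upd Hw Hth).
    rewrite (ev_fun (Hg a) Hb) pv_nf S3 -pv_nf; exact: Pb.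
  pose f : Dom (Arr (nty bo x) t0) := exist _ g (ex_intro _ (sb th (Lam x u)) key).
  exists f; split; last exact: key.
  apply: ev_Lam => a; exact: Hg.
Qed.

Lemma thv0 y : thv (sub0 bo) y = Nm bo y.
Proof. by []. Qed.

Lemma I0_adm s (t : tm s) : exists a, ev I0 t a /\ pv t a.
Proof.
have [a [Ha Pa]] := adm t (th := sub0 bo) (I := I0) (fun y => I0_pv y).
exists a; split => //; case: HS => _ [_ [_ S4]].
by rewrite pv_nf -S4 -pv_nf.
Qed.

Theorem model_E (A : tm o -> Prop) : (forall s, A s -> E s) -> model I0 A.
Proof.
move=> AE; split.
- move=> s t; have [a [Ha _]] := I0_adm t; by exists a.
- exists bO; split.
  + split; first by exists mkO; [exact: mkO_bO|exact: bO_mkO].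
    split; first by [].
    move=> s a c; exact: decE_spec.
  + move=> s As; have [v [Hv Pv]] := I0_adm s; exists v; split => //.
    move: Pv; rewrite pvO (Enorm (AE _ As)); case: (bO v) => // H; by case: H; apply: AE.
Qed.

Theorem surj_E (Hc : forall s : tm o, nf s = s -> E s \/ E (Neg s)) : surjective I0.
Proof.
move=> s a; have [t Ht] := W a; have [a' [Ha' Pa']] := I0_adm t.
exists t; by rewrite (Uniq Hc Ht Pa').
Qed.

End Model.


Section Enc.
Variable B : countType.
Variable bo : B.
Local Notation ty := (ty B).
Local Notation tm := (tm bo).
Local Notation name := (name B).
Local Notation o := (o bo).

Lemma pickle_inj (T : countType) : injective (@pickle T).
Proof. exact: pcan_inj pickleK. Qed.

Fixpoint enc_ty (s : ty) : GenTree.tree nat :=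
  match s with
  | Base b => GenTree.Leaf (pickle b)
  | Arr s t => GenTree.Node 0 [:: enc_ty s; enc_ty t]
  end.

Definition enc_name (x : name) : GenTree.tree nat :=
  match x with
  | NVar s n => GenTree.Node 0 [:: enc_ty s; GenTree.Leaf n]
  | NNeg => GenTree.Node 1 [::]
  | NEq s => GenTree.Node 2 [:: enc_ty s]
  end.

Fixpoint enc_tm s (t : tm s) : GenTree.tree nat :=
  match t with
  | Nm x => GenTree.Node 0 [:: enc_name x]
  | App s t u v => GenTree.Node 1 [:: enc_ty s; enc_tm u; enc_tm v]
  | Lam x t u => GenTree.Node 2 [:: enc_name x; enc_tm u]
  end.

Lemma enc_ty_inj s s' : enc_ty s = enc_ty s' -> s = s'.
Proof.
elim: s s' => [b|s1 IH1 s2 IH2] [b'|s1' s2'] //=.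
- by case => /pickle_inj ->.
- by case => /IH1 -> /IH2 ->.
Qed.

Lemma enc_name_inj x x' : enc_name x = enc_name x' -> x = x'.
Proof.
case: x => [s n||s]; case: x' => [s' n'||s'] //=.
- by case => /enc_ty_inj -> ->.
- by case => /enc_ty_inj ->.
Qed.

Lemma enc_tm_inj s (u : tm s) s' (u' : tm s') : enc_tm u = enc_tm u' ->
  existT (fun s => tm s) s u = existT _ s' u'.
Proof.
elim: u s' u' => [x|s0 t0 u IHu v IHv|x t0 u IHu] s' u'; case: u' => [x'|s1 t1 u' v'|x' t1 u'] //=.
- by case => /enc_name_inj ->.
- case => /enc_ty_inj e /IHu Hu /IHv Hv; subst s1.
  have e : t0 = t1 by move: (congr1 (@projT1 _ _) Hu) => /= [].
  subst t1; move: Hu Hv => /tm_inj -> /tm_inj -> //.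
- case => /enc_name_inj e /IHu Hu; subst x'.
  have e : t0 = t1 by move: (congr1 (@projT1 _ _) Hu).
  subst t1; move: Hu => /tm_inj -> //.
Qed.

Definition pk := {s : ty & tm s}.
Definition encP (p : pk) : nat := pickle (enc_tm (projT2 p)).

Lemma encP_inj p q : encP p = encP q -> p = q.
Proof. case: p q => [s u] [s' u']; rewrite /encP /= => /pickle_inj; exact: enc_tm_inj. Qed.

Definition eps (T : Type) (d : T) (P : T -> Prop) : T :=
  match excluded_middle_informative (exists x, P x) with
  | left h => proj1_sig (constructive_indefinite_description _ h)
  | right _ => d
  end.

Lemma eps_spec T (d : T) (P : T -> Prop) : (exists x, P x) -> P (eps d P).
Proof.
move=> h; rewrite /eps; case: excluded_middle_informative => [h'|//].
by case: constructive_indefinite_description.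
Qed.

Definition dk (n : nat) : pk := eps (existT _ o (Nm bo (NVar o 0))) (fun p => encP p = n).

Lemma dk_encP p : dk (encP p) = p.
Proof. apply: encP_inj; rewrite /dk; apply: (@eps_spec pk _ (fun q => encP q = encP p)); by exists p. Qed.

End Enc.

Section Chain.
Variable B : countType.
Variable bo : B.
Local Notation ty := (ty B).
Local Notation tm := (tm bo).
Local Notation name := (name B).
Local Notation o := (o bo).
Local Notation pk := (pk bo).

Variable nf : forall s, tm s -> tm s.
Variable G : (tm o -> Prop) -> Prop.
Hypothesis HG : acc nf G.

Definition Req (c : nat) (p1 p2 p3 p4 : pk) (A A' : tm o -> Prop) : Prop :=
  match c with
  | 0 => forall s, p1 = existT _ o s -> A (Neg (Neg s)) -> A' s
  | 1 => forall s t : tm o, p1 = existT _ o s -> p2 = existT _ o t -> A (Eqt s t) ->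
           (A' s /\ A' t) \/ (A' (Neg s) /\ A' (Neg t))
  | 2 => forall s t : tm o, p1 = existT _ o s -> p2 = existT _ o t -> A (Neq s t) ->
           (A' s /\ A' (Neg t)) \/ (A' (Neg s) /\ A' t)
  | 3 => forall s t (f g : tm (Arr s t)) (u : tm s), p1 = existT _ (Arr s t) f ->
           p2 = existT _ (Arr s t) g -> p3 = existT _ s u -> A (Eqt f g) -> nf u = u ->
           A' (Eqt (nf (App f u)) (nf (App g u)))
  | 4 => forall s t (f g : tm (Arr s t)), p1 = existT _ (Arr s t) f ->
           p2 = existT _ (Arr s t) g -> A (Neq f g) ->
           exists n : nat, A' (Neq (nf (App f (Nm bo (NVar s n)))) (nf (App g (Nm bo (NVar s n)))))
  | 5 => forall (s : ty) (n : nat) (u v : tm o), p1 = existT _ o u -> p2 = existT _ o v ->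
           Defs.head u = Some (NVar s n) -> Defs.head v = Some (NVar s n) ->
           A u -> A (Neg v) -> some_arg (fun r a c => A' (Neq a c)) u v
  | 6 => forall (al : B), al <> bo -> forall (s : ty) (n : nat) (u v : tm (Base al)),
           p1 = existT _ (Base al) u -> p2 = existT _ (Base al) v ->
           Defs.head u = Some (NVar s n) -> Defs.head v = Some (NVar s n) ->
           A (Neq u v) -> some_arg (fun r a c => A' (Neq a c)) u v
  | 7 => forall (al : B), al <> bo -> forall s t u v : tm (Base al),
           p1 = existT _ (Base al) s -> p2 = existT _ (Base al) t ->
           p3 = existT _ (Base al) u -> p4 = existT _ (Base al) v ->
           A (Eqt s t) -> A (Neq u v) ->
           (A' (Neq s u) /\ A' (Neq t u)) \/ (A' (Neq s v) /\ A' (Neq t v))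
  | 8 => complete nf G -> forall s : tm o, p1 = existT _ o s -> nf s = s -> A' s \/ A' (Neg s)
  | _ => True
  end.

Lemma existT_arr s t s' t' (f : tm (Arr s t)) (f' : tm (Arr s' t')) :
  existT (fun s => tm s) (Arr s t) f = existT _ (Arr s' t') f' -> s = s' /\ t = t'.
Proof. by move=> /(congr1 (@projT1 _ _)) /= []. Qed.

Lemma existT_base al al' (u : tm (Base al)) (u' : tm (Base al')) :
  existT (fun s => tm s) (Base al) u = existT _ (Base al') u' -> al = al'.
Proof. by move=> /(congr1 (@projT1 _ _)) /= []. Qed.

Lemma some_arg_G (A : tm o -> Prop) t (u v : tm t) :
  some_arg (fun r a c => G (add A (Neq a c))) u v ->
  exists A', G A' /\ (forall x, A x -> A' x) /\ some_arg (fun r a c => A' (Neq a c)) u v.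
Proof.
elim => [s t0 u0 v0 a c H|s t0 u0 v0 a c _ [A' [H1 [H2 H3]]]].
- exists (add A (Neq a c)); split => //; split; first by move=> x; left.
  apply: sa_here; by right.
- exists A'; split => //; split => //; exact: sa_there.
Qed.

Lemma step_ex (A : tm o -> Prop) : G A -> forall c p1 p2 p3 p4,
  exists A', G A' /\ (forall x, A x -> A' x) /\ Req c p1 p2 p3 p4 A A'.
Proof.
move=> GA c p1 p2 p3 p4.
have triv : (forall A', G A' -> (forall x, A x -> A' x) -> Req c p1 p2 p3 p4 A A' ->
   exists A', G A' /\ (forall x, A x -> A' x) /\ Req c p1 p2 p3 p4 A A').
  move=> A' H1 H2 H3; by exists A'.
have sub1 : forall s, forall x, A x -> add A s x by move=> s x Ax; left.
have sub2 : forall s t, forall x, A x -> add (add A s) t x by move=> s t x Ax; left; left.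
case: c triv => [|[|[|[|[|[|[|[|[|c]]]]]]]]] triv /=.
- case: (classic (exists s, p1 = existT _ o s /\ A (Neg (Neg s)))) => [[s0 [e0 H0]]|nH].
  + apply: (triv (add A s0)); [exact: acc_DN HG _ GA _ H0|exact: sub1|].
    move=> s e _; rewrite e in e0; move/tm_inj: e0 => ->; by right.
  + apply: (triv A) => // s e H; case: nH; by exists s.
- case: (classic (exists s t, p1 = existT _ o s /\ p2 = existT _ o t /\ A (Eqt s t))) =>
     [[s0 [t0 [e1 [e2 H0]]]]|nH].
  + case: (acc_BQ HG GA H0) => H.
    * apply: (triv _ H); first exact: sub2.
      move=> s t f1 f2 _; rewrite f1 in e1; rewrite f2 in e2.
      move/tm_inj: e1 => ->; move/tm_inj: e2 => ->; left; split; [by left; right|by right].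
    * apply: (triv _ H); first exact: sub2.
      move=> s t f1 f2 _; rewrite f1 in e1; rewrite f2 in e2.
      move/tm_inj: e1 => ->; move/tm_inj: e2 => ->; right; split; [by left; right|by right].
  + apply: (triv A) => // s t f1 f2 H; case: nH; by exists s, t.
- case: (classic (exists s t, p1 = existT _ o s /\ p2 = existT _ o t /\ A (Neq s t))) =>
     [[s0 [t0 [e1 [e2 H0]]]]|nH].
  + case: (acc_BE HG GA H0) => H.
    * apply: (triv _ H); first exact: sub2.
      move=> s t f1 f2 _; rewrite f1 in e1; rewrite f2 in e2.
      move/tm_inj: e1 => ->; move/tm_inj: e2 => ->; left; split; [by left; right|by right].
    * apply: (triv _ H); first exact: sub2.
      move=> s t f1 f2 _; rewrite f1 in e1; rewrite f2 in e2.
      move/tm_inj: e1 => ->; move/tm_inj: e2 => ->; right; split; [by left; right|by right].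
  + apply: (triv A) => // s t f1 f2 H; case: nH; by exists s, t.
- case: (classic (exists s t (f g : tm (Arr s t)) (u : tm s), p1 = existT _ (Arr s t) f /\
      p2 = existT _ (Arr s t) g /\ p3 = existT _ s u /\ A (Eqt f g) /\ nf u = u)) =>
     [[s0 [t0 [f0 [g0 [u0 [e1 [e2 [e3 [H0 N0]]]]]]]]]|nH].
  + apply: (triv _ (acc_FQ HG GA H0 N0)); first exact: sub1.
    move=> s t f g u f1 f2 f3 _ _; rewrite f1 in e1; rewrite f2 in e2; rewrite f3 in e3.
    case: (existT_arr e1) => ??; subst s0 t0.
    move/tm_inj: e1 => ->; move/tm_inj: e2 => ->; move/tm_inj: e3 => ->; by right.
  + apply: (triv A) => // s t f g u f1 f2 f3 H N; case: nH; by exists s, t, f, g, u.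
- case: (classic (exists s t (f g : tm (Arr s t)), p1 = existT _ (Arr s t) f /\
      p2 = existT _ (Arr s t) g /\ A (Neq f g))) =>
     [[s0 [t0 [f0 [g0 [e1 [e2 H0]]]]]]|nH].
  + case: (acc_FE HG GA H0) => n0 Hn.
    apply: (triv _ Hn); first exact: sub1.
    move=> s t f g f1 f2 _; rewrite f1 in e1; rewrite f2 in e2.
    case: (existT_arr e1) => ??; subst s0 t0.
    move/tm_inj: e1 => ->; move/tm_inj: e2 => ->; exists n0; by right.
  + apply: (triv A) => // s t f g f1 f2 H; case: nH; by exists s, t, f, g.
- case: (classic (exists s n (u v : tm o), p1 = existT _ o u /\ p2 = existT _ o v /\
      Defs.head u = Some (NVar s n) /\ Defs.head v = Some (NVar s n) /\ A u /\ A (Neg v))) =>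
     [[s0 [n0 [u0 [v0 [e1 [e2 [h1 [h2 [H1 H2]]]]]]]]]|nH].
  + have [A' [GA' [sA' SA']]] := some_arg_G (acc_Mat HG GA h1 h2 H1 H2).
    apply: (triv _ GA' sA') => s n u v f1 f2 _ _ _ _.
    rewrite f1 in e1; rewrite f2 in e2; move/tm_inj: e1 => ->; by move/tm_inj: e2 => ->.
  + apply: (triv A) => // s n u v f1 f2 h1 h2 H1 H2; case: nH; by exists s, n, u, v.
- case: (classic (exists al (ne : al <> bo) s n (u v : tm (Base al)), p1 = existT _ (Base al) u /\
      p2 = existT _ (Base al) v /\
      Defs.head u = Some (NVar s n) /\ Defs.head v = Some (NVar s n) /\ A (Neq u v))) =>
     [[al0 [ne0 [s0 [n0 [u0 [v0 [e1 [e2 [h1 [h2 H1]]]]]]]]]]|nH].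
  + have [A' [GA' [sA' SA']]] := some_arg_G (acc_Dec HG GA ne0 h1 h2 H1).
    apply: (triv _ GA' sA') => al ne s n u v f1 f2 _ _ _.
    rewrite f1 in e1; rewrite f2 in e2; have eal := existT_base e1; subst al0.
    move/tm_inj: e1 => ->; by move/tm_inj: e2 => ->.
  + apply: (triv A) => // al ne s n u v f1 f2 h1 h2 H1; case: nH; by exists al, ne, s, n, u, v.
- case: (classic (exists al (ne : al <> bo) (s t u v : tm (Base al)), p1 = existT _ (Base al) s /\
      p2 = existT _ (Base al) t /\ p3 = existT _ (Base al) u /\ p4 = existT _ (Base al) v /\
      A (Eqt s t) /\ A (Neq u v))) =>
     [[al0 [ne0 [s0 [t0 [u0 [v0 [e1 [e2 [e3 [e4 [H1 H2]]]]]]]]]]]|nH].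
  + have key : forall al (ne : al <> bo) (s t u v : tm (Base al)), p1 = existT _ (Base al) s ->
      p2 = existT _ (Base al) t -> p3 = existT _ (Base al) u -> p4 = existT _ (Base al) v ->
      existT (fun b => (tm (Base b) * tm (Base b) * tm (Base b) * tm (Base b))%type) al (s, t, u, v) =
      existT _ al0 (s0, t0, u0, v0).
      move=> al ne s t u v f1 f2 f3 f4; rewrite f1 in e1; rewrite f2 in e2; rewrite f3 in e3; rewrite f4 in e4.
      have eal := existT_base e1; subst al0.
      move/tm_inj: e1 => ->; move/tm_inj: e2 => ->; move/tm_inj: e3 => ->; by move/tm_inj: e4 => ->.
    case: (acc_Con HG GA ne0 H1 H2) => H.
    * apply: (triv _ H); first exact: sub2.
      move=> al ne s t u v f1 f2 f3 f4 _ _; have ek := key _ ne _ _ _ _ f1 f2 f3 f4.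
      have eal : al = al0 by move: (congr1 (@projT1 _ _) ek).
      subst al0; have := @inj_pair2_eq_dec B (@eq_comparable B) (fun b => (tm (Base b) * tm (Base b) * tm (Base b) * tm (Base b))%type) al _ _ ek; case=> -> -> -> ->.
      left; split; [by left; right|by right].
    * apply: (triv _ H); first exact: sub2.
      move=> al ne s t u v f1 f2 f3 f4 _ _; have ek := key _ ne _ _ _ _ f1 f2 f3 f4.
      have eal : al = al0 by move: (congr1 (@projT1 _ _) ek).
      subst al0; have := @inj_pair2_eq_dec B (@eq_comparable B) (fun b => (tm (Base b) * tm (Base b) * tm (Base b) * tm (Base b))%type) al _ _ ek; case=> -> -> -> ->.
      right; split; [by left; right|by right].
  + apply: (triv A) => // al ne s t u v f1 f2 f3 f4 H1 H2; case: nH; by exists al, ne, s, t, u, v.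
- case: (classic (complete nf G /\ exists s, p1 = existT _ o s /\ nf s = s)) =>
     [[Hc [s0 [e1 N0]]]|nH].
  + case: (Hc _ GA _ N0) => H.
    * apply: (triv _ H); first exact: sub1.
      move=> _ s f1 _; rewrite f1 in e1; move/tm_inj: e1 => ->; left; by right.
    * apply: (triv _ H); first exact: sub1.
      move=> _ s f1 _; rewrite f1 in e1; move/tm_inj: e1 => ->; right; by right.
  + apply: (triv A) => // Hc s f1 N; case: nH; split => //; by exists s.
- exact: (triv A).
Qed.


Variable A0 : tm o -> Prop.
Hypothesis GA0 : G A0.

Definition task (k : nat) : nat * pk * pk * pk * pk :=
  match (unpickle (Cantor.of_nat k).1 : option (nat * nat * nat * nat * nat)) with
  | Some (c, n1, n2, n3, n4) => (c, dk bo n1, dk bo n2, dk bo n3, dk bo n4)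
  | None => (9, dk bo 0, dk bo 0, dk bo 0, dk bo 0)
  end.

Definition nextS (X : {A | G A}) (k : nat) : {A | G A} :=
  match task k with
  | (c, p1, p2, p3, p4) =>
    let H := step_ex (proj2_sig X) c p1 p2 p3 p4 in
    exist _ (proj1_sig (constructive_indefinite_description _ H))
            (proj1 (proj2_sig (constructive_indefinite_description _ H)))
  end.

Fixpoint ch (k : nat) : {A | G A} :=
  match k with 0 => exist _ A0 GA0 | S k => nextS (ch k) k end.

Lemma ch_step k : (forall x, sval (ch k) x -> sval (ch k.+1) x) /\
  (match task k with (c, p1, p2, p3, p4) => Req c p1 p2 p3 p4 (sval (ch k)) (sval (ch k.+1)) end).
Proof.
rewrite /= /nextS; case: (task k) => [[[[c p1] p2] p3] p4].
by case: constructive_indefinite_description => A' [GA' [H1 H2]] /=.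
Qed.

Lemma ch_mono k k' : k <= k' -> forall x, sval (ch k) x -> sval (ch k') x.
Proof.
elim: k' => [|k' IH]; first by rewrite leqn0 => /eqP ->.
rewrite leq_eqVlt => /orP [/eqP -> //|]; rewrite ltnS => /IH H x Hx.
case: (ch_step k') => H1 _; apply: H1; exact: H.
Qed.

Lemma task_hit c n1 n2 n3 n4 k0 : exists k, k0 <= k /\
  task k = (c, dk bo n1, dk bo n2, dk bo n3, dk bo n4).
Proof.
exists (Cantor.to_nat (pickle (c, n1, n2, n3, n4), k0)); split.
- have := Cantor.to_nat_non_decreasing (pickle (c, n1, n2, n3, n4)) k0 => /leP H.
  apply: leq_trans H; exact: leq_addr.
- by rewrite /task Cantor.cancel_of_to /= pickleK.
Qed.

Lemma fire c p1 p2 p3 p4 k0 : exists k, k0 <= k /\ Req c p1 p2 p3 p4 (sval (ch k)) (sval (ch k.+1)).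
Proof.
have [k [Hk Ht]] := task_hit c (encP p1) (encP p2) (encP p3) (encP p4) k0.
exists k; split => //; case: (ch_step k) => _; by rewrite Ht !dk_encP.
Qed.

Definition Ech (s : tm o) : Prop := exists k, sval (ch k) s.

Lemma Ech_at k0 k s : k0 <= k -> sval (ch k0) s -> sval (ch k) s.
Proof. move=> H; exact: ch_mono. Qed.

Lemma A0_E s : A0 s -> Ech s.
Proof. by move=> H; exists 0. Qed.

Lemma E_norm s : Ech s -> nf s = s.
Proof. case=> k H; exact: (acc_branch HG (proj2_sig (ch k)) H). Qed.

Local Notation p0 := (existT (fun s => tm s) o (Nm bo (NVar o 0))).

Lemma E_DN s : Ech (Neg (Neg s)) -> Ech s.
Proof.
case=> k0 H; have [k [Hk R]] := fire 0 (existT _ o s) p0 p0 p0 k0.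
exists k.+1; apply: R => //; exact: Ech_at Hk H.
Qed.

Lemma E_BQ s t : Ech (Eqt s t) -> (Ech s /\ Ech t) \/ (Ech (Neg s) /\ Ech (Neg t)).
Proof.
case=> k0 H; have [k [Hk R]] := fire 1 (existT _ o s) (existT _ o t) p0 p0 k0.
case: (R s t erefl erefl (Ech_at Hk H)) => [[H1 H2]|[H1 H2]]; [left|right]; split; by exists k.+1.
Qed.

Lemma E_BE s t : Ech (Neq s t) -> (Ech s /\ Ech (Neg t)) \/ (Ech (Neg s) /\ Ech t).
Proof.
case=> k0 H; have [k [Hk R]] := fire 2 (existT _ o s) (existT _ o t) p0 p0 k0.
case: (R s t erefl erefl (Ech_at Hk H)) => [[H1 H2]|[H1 H2]]; [left|right]; split; by exists k.+1.
Qed.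

Lemma E_FQ s t (f g : tm (Arr s t)) : Ech (Eqt f g) -> forall u : tm s, nf u = u ->
  Ech (Eqt (nf (App f u)) (nf (App g u))).
Proof.
case=> k0 H u N; have [k [Hk R]] := fire 3 (existT _ _ f) (existT _ _ g) (existT _ _ u) p0 k0.
exists k.+1; exact: (R s t f g u erefl erefl erefl (Ech_at Hk H) N).
Qed.

Lemma E_FE s t (f g : tm (Arr s t)) : Ech (Neq f g) -> exists n : nat,
  Ech (Neq (nf (App f (Nm bo (NVar s n)))) (nf (App g (Nm bo (NVar s n))))).
Proof.
case=> k0 H; have [k [Hk R]] := fire 4 (existT _ _ f) (existT _ _ g) p0 p0 k0.
case: (R s t f g erefl erefl (Ech_at Hk H)) => n Hn; exists n; by exists k.+1.
Qed.

Lemma some_arg_mono (P Q : forall s, tm s -> tm s -> Prop) t (u v : tm t) :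
  (forall r a c, P r a c -> Q r a c) -> some_arg P u v -> some_arg Q u v.
Proof.
move=> PQ; elim => [s t0 u0 v0 a c H|s t0 u0 v0 a c _ IH].
- apply: sa_here; exact: PQ.
- exact: sa_there.
Qed.

Lemma E_Mat (s : ty) (n : nat) (u v : tm o) :
  Defs.head u = Some (NVar s n) -> Defs.head v = Some (NVar s n) ->
  Ech u -> Ech (Neg v) -> some_arg (fun r a c => Ech (Neq a c)) u v.
Proof.
move=> h1 h2 [k1 H1] [k2 H2].
have [k [Hk R]] := fire 5 (existT _ o u) (existT _ o v) p0 p0 (maxn k1 k2).
have := R s n u v erefl erefl h1 h2 (Ech_at (leq_trans (leq_maxl _ _) Hk) H1)
  (Ech_at (leq_trans (leq_maxr _ _) Hk) H2).
apply: some_arg_mono => r a c H; by exists k.+1.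
Qed.

Lemma E_Dec (al : B) : al <> bo -> forall (s : ty) (n : nat) (u v : tm (Base al)),
  Defs.head u = Some (NVar s n) -> Defs.head v = Some (NVar s n) ->
  Ech (Neq u v) -> some_arg (fun r a c => Ech (Neq a c)) u v.
Proof.
move=> ne s n u v h1 h2 [k0 H].
have [k [Hk R]] := fire 6 (existT _ _ u) (existT _ _ v) p0 p0 k0.
have := R al ne s n u v erefl erefl h1 h2 (Ech_at Hk H).
apply: some_arg_mono => r a c H'; by exists k.+1.
Qed.

Lemma E_Con (al : B) : al <> bo -> forall s t u v : tm (Base al),
  Ech (Eqt s t) -> Ech (Neq u v) ->
  (Ech (Neq s u) /\ Ech (Neq t u)) \/ (Ech (Neq s v) /\ Ech (Neq t v)).
Proof.
move=> ne s t u v [k1 H1] [k2 H2].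
have [k [Hk R]] := fire 7 (existT _ _ s) (existT _ _ t) (existT _ _ u) (existT _ _ v) (maxn k1 k2).
case: (R al ne s t u v erefl erefl erefl erefl (Ech_at (leq_trans (leq_maxl _ _) Hk) H1)
  (Ech_at (leq_trans (leq_maxr _ _) Hk) H2)) => [[H3 H4]|[H3 H4]]; [left|right]; split; by exists k.+1.
Qed.

Lemma E_complete : complete nf G -> forall s : tm o, nf s = s -> Ech s \/ Ech (Neg s).
Proof.
move=> Hc s N; have [k [Hk R]] := fire 8 (existT _ o s) p0 p0 p0 0.
case: (R Hc s erefl N) => H; [left|right]; by exists k.+1.
Qed.

End Chain.


Theorem theorem8p3 (B : countType) (bo : B)
    (nf : forall s, tm bo s -> tm bo s)
    (sb : sub bo -> forall s, tm bo s -> tm bo s)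
    (G : (tm bo (o bo) -> Prop) -> Prop) (A : tm bo (o bo) -> Prop) :
  is_normalization nf -> is_subst nf sb -> acc nf G -> G A ->
  (exists (F : frame B) (I : asg bo F), model I A) /\
  (complete nf G -> exists (F : frame B) (I : asg bo F), model I A /\ surjective I).
Proof.
move=> HN HS HG GA.
pose E := @Ech B bo nf G HG A GA.
have Hn := @E_norm B bo nf G HG A GA.
have Hdn := @E_DN B bo nf G HG A GA.
have Hbq := @E_BQ B bo nf G HG A GA.
have Hbe := @E_BE B bo nf G HG A GA.
have Hfq := @E_FQ B bo nf G HG A GA.
have Hfe := @E_FE B bo nf G HG A GA.
have Hmat := @E_Mat B bo nf G HG A GA.
have Hdec := @E_Dec B bo nf G HG A GA.
have Hcon := @E_Con B bo nf G HG A GA.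
have M := @model_E B bo nf HN E Hn Hdn Hbq Hbe Hfq Hfe Hmat Hdec Hcon sb HS A (@A0_E B bo nf G HG A GA).
split; first by eexists; eexists; exact: M.
move=> Hc; eexists; eexists; split; first exact: M.
exact: (@surj_E B bo nf HN E Hn Hdn Hbq Hbe Hfq Hfe Hmat Hdec Hcon sb HS (@E_complete B bo nf G HG A GA Hc)).
Qed.
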